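(* A connected graph $G$ on $n$ vertices satisfies $\operatorname{cdim}(G)=n-1$ if and only if $G$ is uniformly connected, i.e., there is an integer $k$ such that $\kappa(v,w)=k$ for all pairs of distinct vertices $v,w\in V(G)$.
   Context: All graphs are finite, simple, undirected and nonempty. For distinct vertices $v,w$, $\kappa(v,w)$ is the maximum number of internally vertex-disjoint $v$–$w$ paths (an edge $vw$ counts as one such path); $\kappa(v,v)=\infty$. For an ordered vertex set $W=(w_1,\ldots,w_k)$, $r_G(v,W)=[\kappa(v,w_1),\ldots,\kappa(v,w_k)]$. $W$ is resolving if $r_G(v_1,W)=r_G(v_2,W)$ implies $v_1=v_2$ (the empty set is resolving for the one-vertex graph). The connectivity dimension $\operatorname{cdim}(G)$ is the minimum cardinality of a resolving set. *)

(* Defs.v *)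
(* Simple graphs as symmetric irreflexive relations on a finType. *)
From mathcomp Require Import all_boot.
From Stdlib Require Import ClassicalEpsilon.
Set Implicit Arguments. Unset Strict Implicit. Unset Printing Implicit Defensive.

Section Graph.
Variables (T : finType) (e : rel T).

Definition decide (P : Prop) : bool :=
  if excluded_middle_informative P then true else false.

Definition connected_graph : Prop := forall v w : T, connect e v w.

(* p is (the sequence of vertices after v of) a v--w path:
   v :: p is an e-path ending at w with no repeated vertex, and v <> w. *)
Definition is_vw_path (v w : T) (p : seq T) : bool :=
  [&& v != w, path e v p, last v p == w & uniq (v :: p)].

Definition interior (v : T) (p : seq T) : seq T := behead (belast v p).

Definition disjoint_paths (v w : T) (P : seq (seq T)) : bool :=
  all (is_vw_path v w) P &&
  pairwise (fun p q => (p != q) &&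
              all (fun x => x \notin interior v q) (interior v p)) P.

Definition has_k_disjoint_paths (v w : T) (k : nat) : Prop :=
  exists P : seq (seq T), size P = k /\ disjoint_paths v w P.

(* maximum number of internally disjoint v--w paths (for v <> w);
   such a number never exceeds #|T|, so the max over 0..#|T| is the true max. *)
Definition kappa_nat (v w : T) : nat :=
  \max_(k < #|T|.+1 | decide (has_k_disjoint_paths v w k)) (k : nat).

(* kappa v w, with None standing for infinity (kappa v v = oo) *)
Definition kappa (v w : T) : option nat :=
  if v == w then None else Some (kappa_nat v w).

Definition rep (v : T) (W : seq T) : seq (option nat) := [seq kappa v x | x <- W].

Definition resolving (W : seq T) : Prop :=
  uniq W /\ forall v1 v2 : T, rep v1 W = rep v2 W -> v1 = v2.

(* connectivity dimension: the minimum cardinality of a resolving set.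
   The default #|T| is attained by enum T, which is always resolving. *)
Definition cdim : nat :=
  \big[minn/#|T|]_(k < #|T|.+1 |
      decide (exists W : seq T, size W = k /\ resolving W)) (k : nat).

Definition uniformly_connected : Prop :=
  exists k : nat, forall v w : T, v != w -> kappa v w = Some k.

End Graph.

(* Main.v *)
Require Import Defs.
From mathcomp Require Import all_boot zify.
From Stdlib Require Import ClassicalEpsilon.
Set Implicit Arguments. Unset Strict Implicit. Unset Printing Implicit Defensive.
Section S.
Variables (T : finType) (e : rel T) (e_sym : symmetric e).

Definition rv (v : T) (p : seq T) := rcons (rev (interior v p)) v.

Lemma interior_rcons (w : T) J v : interior w (rcons J v) = J.
Proof. by rewrite /interior belast_rcons. Qed.

Lemma path_split (v : T) p : p != [::] -> p = rcons (interior v p) (last v p).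
Proof. by case: p => [|y s] //= _; rewrite /interior /= -lastI. Qed.

Lemma valid_split v w p : is_vw_path e v w p -> p = rcons (interior v p) w.
Proof.
move=> /and4P [vw pth lst un].
have pn : p != [::] by case: p lst pth un => //= /eqP E; rewrite E eqxx in vw.
by rewrite {1}(path_split v pn) (eqP lst).
Qed.

Lemma rv_valid v w p : is_vw_path e v w p -> is_vw_path e w v (rv v p).
Proof.
move=> H; have pe := valid_split H; move/and4P: H => [vw pth lst un].
rewrite /is_vw_path /rv.
set I := interior v p in pe *; rewrite pe in pth un.
have ur : w :: rcons (rev I) v = rev (v :: rcons I w) by rewrite rev_cons rev_rcons.
rewrite eq_sym vw last_rcons eqxx ur rev_uniq un /= andbT.
have := rev_path e v (rcons I w); rewrite last_rcons belast_rcons rev_cons => ->.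
by rewrite (@eq_path _ _ e) // => x y; rewrite e_sym.
Qed.

Lemma has_sym v w k : has_k_disjoint_paths e v w k -> has_k_disjoint_paths e w v k.
Proof.
move=> [P [sz /andP [alP pwP]]]; exists (map (rv v) P); split; first by rewrite size_map.
apply/andP; split.
  by rewrite all_map; apply/allP => p pP /=; apply: rv_valid; apply: (allP alP).
rewrite pairwise_map; move: pwP; apply: (sub_in_pairwise (P := is_vw_path e v w)) => //.
move=> p q Hp Hq /andP [pq dj]; rewrite /relpre /= /rv !interior_rcons.
apply/andP; split.
  apply: contra pq => /eqP E; apply/eqP.
  rewrite (valid_split Hp) (valid_split Hq).
  by move: E => /eqP; rewrite eqseq_rcons eqxx andbT => /eqP /(congr1 rev); rewrite !revK => ->.
by rewrite all_rev; apply/allP => x xI /=; rewrite mem_rev; apply: (allP dj).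
Qed.

Lemma decideP (P : Prop) : decide P <-> P.
Proof. by rewrite /decide; case: excluded_middle_informative. Qed.

Lemma kappa_nat_sym v w : kappa_nat e v w = kappa_nat e w v.
Proof.
apply: eq_bigl => k; apply/idP/idP => /decideP H; apply/decideP; exact: has_sym.
Qed.
End S.
Section M.
Variables (T : finType) (e : rel T).

Lemma kappa_eq v w : v != w -> kappa e v w = Some (kappa_nat e v w).
Proof. by rewrite /kappa => /negbTE ->. Qed.

Lemma rep_in v1 v2 W : rep e v1 W = rep e v2 W -> v1 \in W -> v1 = v2.
Proof.
move=> /eq_in_map H v1W; have := H v1 v1W; rewrite /kappa eqxx.
by case: eqP => [->|].
Qed.

Lemma rep_res v1 v2 W : rep e v1 W = rep e v2 W -> v1 \in W \/ v2 \in W -> v1 = v2.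
Proof. by move=> H [h|h]; [exact: rep_in h | apply/esym; apply: rep_in h]. Qed.

Lemma big_minn_le (I : eqType) (r : seq I) (P : pred I) (F : I -> nat) x j :
  j \in r -> P j -> \big[minn/x]_(i <- r | P i) F i <= F j.
Proof.
elim: r => //= i r IH; rewrite inE big_cons; case/orP => [/eqP <- -> | jr Pj].
  exact: geq_minl.
by case: (P i); rewrite ?geq_min IH // orbT.
Qed.

Lemma cdim_le m W : size W = m -> resolving e W -> m <= #|T| -> cdim e <= m.
Proof.
move=> sz R mn; rewrite /cdim.
apply: (@big_minn_le _ _ _ (fun k : 'I_#|T|.+1 => (k : nat)) _ (Ordinal (mn : m < #|T|.+1))).
  exact: mem_index_enum.
by apply/decideP; exists W.
Qed.

Lemma cdim_ge m : m <= #|T| -> (forall W, resolving e W -> m <= size W) -> m <= cdim e.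
Proof.
move=> mn H; rewrite /cdim; apply: (big_ind (fun x => m <= x)) => //.
  by move=> x y; rewrite leq_min => -> ->.
by move=> k /decideP [W [<- R]]; exact: H.
Qed.
End M.
Theorem mainTheorem3 (T : finType) (e : rel T)
  (e_sym : symmetric e) (e_irr : irreflexive e)
  (nonempty : 0 < #|T|) (conn : connected_graph e) :
  cdim e = #|T| - 1 <-> uniformly_connected e.
Proof.
have two : forall a b : T, a != b -> 2 <= #|T|.
  by move=> a b ab; have := max_card (mem [set a; b]); rewrite cards2 ab.
split=> [Hc|[k Hk]].
- have triple : forall a b x : T, a != b -> a != x -> b != x ->
      kappa_nat e a x = kappa_nat e b x.
    move=> a b x ab ax bx; apply/eqP; case: eqP => // Hne; exfalso.
    set W := enum (~: [set a; b]).
    have szW : size W = #|T| - 2.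
      by rewrite /W -cardE; have := cardsC [set a; b]; rewrite cards2 ab; timeout 10 lia.
    have key : rep e a W <> rep e b W.
      move/eq_in_map => H; apply: Hne.
      have xW : x \in W by rewrite mem_enum in_setC in_set2 negb_or eq_sym ax eq_sym bx.
      by have := H x xW; rewrite !kappa_eq // => -[].
    have R : resolving e W.
      split; first exact: enum_uniq.
      move=> v1 v2 Hr.
      case: (boolP (v1 \in W)) => [h|h1]; first exact: (rep_res Hr (or_introl h)).
      case: (boolP (v2 \in W)) => [h|h2]; first exact: (rep_res Hr (or_intror h)).
      move: h1 h2 Hr; rewrite !mem_enum !in_setC !negbK !in_set2.
      move=> /orP [] /eqP -> /orP [] /eqP -> //.
      by move=> Hr; exfalso; apply: key; rewrite Hr.
    have := cdim_le szW R (leq_subr _ _); rewrite Hc.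
    have := two _ _ ab; timeout 10 lia.
  have L1 : forall a b x : T, a != x -> b != x -> kappa_nat e a x = kappa_nat e b x.
    move=> a b x ax bx; case: (a =P b) => [->//|/eqP ab]; exact: triple.
  case: (leqP #|T| 1) => [n1|n2].
    exists 0 => v w vw; have := two _ _ vw; timeout 10 lia.
  have /card_gt1P [a0 [b0 [_ _ ab]]] := n2.
  exists (kappa_nat e a0 b0) => v w vw; rewrite (kappa_eq e vw); congr Some.
  have ba : b0 != a0 by rewrite eq_sym.
  case: (w =P a0) vw => [->|/eqP wa] vw.
    rewrite (L1 v b0 a0 vw ba); exact: kappa_nat_sym.
  have aw : a0 != w by rewrite eq_sym.
  rewrite (L1 v a0 w vw aw) (kappa_nat_sym e_sym a0 w) (L1 w b0 a0 wa ba).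
  exact: kappa_nat_sym.
- apply/eqP; rewrite eqn_leq; apply/andP; split.
    have /card_gt0P [u _] := nonempty.
    set W := enum (~: [set u]).
    have szW : size W = #|T| - 1.
      by rewrite /W -cardE; have := cardsC [set u]; rewrite cards1; timeout 10 lia.
    apply: (cdim_le szW); last exact: leq_subr.
    split; first exact: enum_uniq.
    move=> v1 v2 Hr.
    case: (boolP (v1 \in W)) => [h|h1]; first exact: (rep_res Hr (or_introl h)).
    case: (boolP (v2 \in W)) => [h|h2]; first exact: (rep_res Hr (or_intror h)).
    move: h1 h2; rewrite !mem_enum !in_setC !negbK !in_set1.
    by move=> /eqP -> /eqP ->.
  apply: cdim_ge; first exact: leq_subr.
  move=> W [uW R]; rewrite leqNgt; apply/negP => sW.
  have cW : #|~: [set x in W]| = #|T| - size W.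
    have := cardsC [set x in W]; rewrite cardsE (card_uniqP uW); timeout 10 lia.
  have : 1 < #|~: [set x in W]| by rewrite cW; timeout 10 lia.
  move=> /card_gt1P [u1 [u2 [h1 h2 u12]]].
  move: h1 h2; rewrite !in_setC !inE => h1 h2.
  move/negP: u12; apply; apply/eqP; apply: R.
  apply/eq_in_map => x xW.
  rewrite Hk; last by apply: contraNneq h1 => ->.
  by rewrite Hk //; apply: contraNneq h2 => ->.
Qed.
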